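(* Let $(G,\varphi)$ be a complex unit gain graph of order $n$ with $r(G,\varphi)=2n-2c(G)-2\alpha(G)$, and let $u$ be a vertex of $G$ lying on a cycle of $G$. Then: (i) $r(G,\varphi)=r(G-u,\varphi)$; (ii) $r(G-u,\varphi)=2(n-1)-2c(G-u)-2\alpha(G-u)$; (iii) $c(G)=c(G-u)+1$; (iv) $\alpha(G)=\alpha(G-u)$; (v) $u$ lies on exactly one cycle of $G$, and $u$ is not a quasi-pendant vertex of $G$.
   Context: A complex unit gain graph $(G,\varphi)$ is a simple finite graph $G$ with a gain function $\varphi$ assigning to each oriented edge $e_{ij}$ a complex number of modulus $1$ with $\varphi(e_{ji})=\overline{\varphi(e_{ij})}$; its adjacency matrix has $(i,j)$-entry $\varphi(e_{ij})$ for adjacent $v_i,v_j$ and $0$ otherwise, and $r(G,\varphi)$ is its rank; induced subgraphs carry the restricted gain. $\alpha$ is the independence number and $c(G)=|E(G)|-|V(G)|+\omega(G)$ the cyclomatic number ($\omega$ = number of components). A pendant vertex is a vertex of degree $1$; a quasi-pendant vertex is a vertex that is adjacent to a pendant vertex and is not itself a pendant vertex. *)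

(* Defs.v *)
From HB Require Import structures.
From mathcomp Require Import all_boot all_order all_algebra.
From mathcomp Require Import complex reals.
Set Implicit Arguments. Unset Strict Implicit. Unset Printing Implicit Defensive.
Import Order.TTheory GRing.Theory Num.Theory.

Local Open Scope ring_scope.

Definition simple_graph (T : finType) (e : rel T) : Prop :=
  irreflexive e /\ symmetric e.

Definition unit_gain (R : realType) (T : finType) (e : rel T)
  (phi : T -> T -> R[i]) : Prop :=
  forall x y, e x y -> `|phi x y| = 1 /\ phi y x = (phi x y)^*.

(* Induced subgraph on vertex set S (with restricted gain): its adjacency
   matrix, indexed through the enumeration of S. *)
Definition gain_adj (R : realType) (T : finType) (e : rel T)
  (phi : T -> T -> R[i]) (S : {set T}) : 'M[R[i]]_#|S| :=
  \matrix_(i, j) (if e (enum_val i) (enum_val j)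
                  then phi (enum_val i) (enum_val j) else 0).

Definition gain_rank (R : realType) (T : finType) (e : rel T)
  (phi : T -> T -> R[i]) (S : {set T}) : nat :=
  \rank (gain_adj e phi S).

Definition independent (T : finType) (e : rel T) (I : {set T}) : bool :=
  [forall x in I, forall y in I, ~~ e x y].

Definition indep_num (T : finType) (e : rel T) (S : {set T}) : nat :=
  \max_(I : {set T} | (I \subset S) && independent e I) #|I|.

Definition edges_in (T : finType) (e : rel T) (S : {set T}) : {set {set T}} :=
  [set E : {set T} | [exists x in S, exists y in S, e x y && (E == [set x; y])]].

Definition restr (T : finType) (e : rel T) (S : {set T}) : rel T :=
  fun x y => [&& x \in S, y \in S & e x y].

Definition ncomp (T : finType) (e : rel T) (S : {set T}) : nat :=
  n_comp (restr e S) (mem S).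

(* Cyclomatic number |E| - |V| + omega (always >= 0, so the nat
   subtraction below is exact). *)
Definition cyclomatic (T : finType) (e : rel T) (S : {set T}) : nat :=
  (#|edges_in e S| + ncomp e S - #|S|)%N.

Definition is_cycle (T : finType) (e : rel T) (p : seq T) : bool :=
  (2 < size p)%N && ucycleb e p.

Definition cycle_edges (T : finType) (p : seq T) : {set {set T}} :=
  [set [set x; next p x] | x in p].

Definition on_unique_cycle (T : finType) (e : rel T) (u : T) : Prop :=
  exists p, [/\ is_cycle e p, u \in p &
    forall q, is_cycle e q -> u \in q -> cycle_edges q = cycle_edges p].

Definition degree (T : finType) (e : rel T) (x : T) : nat := #|[set y | e x y]|.

Definition pendant (T : finType) (e : rel T) (x : T) : bool := degree e x == 1%N.

Definition quasi_pendant (T : finType) (e : rel T) (x : T) : bool :=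
  ~~ pendant e x && [exists y, e x y && pendant e y].

(* Main.v *)
Require Import Defs.
From HB Require Import structures.
From mathcomp Require Import all_boot all_order all_algebra.
From mathcomp Require Import complex reals.
From mathcomp Require Import zify.
Import Order.TTheory GRing.Theory Num.Theory.
Set Implicit Arguments. Unset Strict Implicit. Unset Printing Implicit Defensive.

Section Comb.
Variable T : finType.
Variable e : rel T.
Hypothesis e_sym : symmetric e.
Hypothesis eirr : irreflexive e.
Implicit Types (S : {set T}) (x y z a b : T) (p : seq T).

Definition Nb (S : {set T}) x := [set y in S | e x y].
Definition Dg (S : {set T}) x := #|Nb S x|.
Definition Kc (S : {set T}) x := #|[set fingraph.root (restr e (S :\ x)) y | y in Nb S x]|.

Lemma restr_sym S : symmetric (restr e S).
Proof. by move=> x y; rewrite /restr e_sym andbCA. Qed.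

Lemma csym S : connect_sym (restr e S).
Proof. exact/sym_connect_sym/restr_sym. Qed.

Lemma path_in S p y : y \in S -> path (restr e S) y p -> last y p \in S.
Proof.
elim: p y => [|z p IH] y yS //= /andP[/and3P[_ zS _] pp]; exact: IH.
Qed.

Lemma connect_in S y z : connect (restr e S) y z -> y \in S -> z \in S.
Proof. by case/connectP=> p pp -> yS; apply: path_in. Qed.

Lemma connect_mono S S' y z : S \subset S' ->
  connect (restr e S) y z -> connect (restr e S') y z.
Proof.
move=> sub /connectP[p pp ->]; apply/connectP; exists p => //.
apply: sub_path pp => a b /and3P[aS bS eab].
by rewrite /restr (subsetP sub _ aS) (subsetP sub _ bS).
Qed.

Lemma om_card S : ncomp e S = #|[set fingraph.root (restr e S) y | y in S]|.
Proof.
rewrite /ncomp /n_comp_mem; apply: eq_card => z; rewrite !inE.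
apply/andP/imsetP => [[/eqP rz zS]|[y yS ->]].
  by exists z.
split; first exact: (roots_root (csym S)).
exact: (connect_in (connect_root _ y)).
Qed.

Lemma edgesP S E0 : reflect (exists a b, [/\ a \in S, b \in S, e a b & E0 = [set a; b]])
  (E0 \in edges_in e S).
Proof.
rewrite inE; apply: (iffP existsP).
  by case=> a /andP[aS /existsP[b /and3P[bS eab /eqP->]]]; exists a, b.
case=> a [b [aS bS eab ->]]; exists a; rewrite aS /=; apply/existsP; exists b.
by rewrite bS eab eqxx.
Qed.

Lemma L_E S x : x \in S -> #|edges_in e S| = (#|edges_in e (S :\ x)| + Dg S x)%N.
Proof.
move=> xS.
have -> : edges_in e S = edges_in e (S :\ x) :|: [set [set x; y] | y in Nb S x].
  apply/setP => E0; rewrite in_setU; apply/idP/idP.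
    case/edgesP => a [b [aS bS eab ->]].
    case: (eqVneq a x) => [ax|ax].
      by apply/orP; right; apply/imsetP; exists b; [rewrite inE bS -ax | rewrite ax].
    case: (eqVneq b x) => [bx|bx].
      apply/orP; right; apply/imsetP; exists a; first by rewrite inE aS -bx e_sym.
      by rewrite bx setUC.
    by apply/orP; left; apply/edgesP; exists a, b; rewrite !in_setD1 ax bx aS bS.
  case/orP.
    case/edgesP => a [b [aS bS eab ->]]; apply/edgesP; exists a, b.
    by move: aS bS; rewrite !in_setD1 => /andP[_ ->] /andP[_ ->].
  case/imsetP => y; rewrite inE => /andP[yS exy] ->; apply/edgesP; exists x, y.
  by [].
rewrite cardsU.
have -> : edges_in e (S :\ x) :&: [set [set x; y] | y in Nb S x] = set0.
  apply/setP => E0; rewrite in_setI in_set0; apply/andP => -[/edgesP[a [b [aS bS _ ->]]]].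
  case/imsetP => y _ /setP /(_ x); rewrite !inE eqxx /=.
  move: aS bS; rewrite !in_setD1 => /andP[ax _] /andP[bx _].
  by rewrite eq_sym (negPf ax) eq_sym (negPf bx).
rewrite cards0 subn0 card_in_imset // => y1 y2; rewrite !inE => /andP[_ e1] /andP[_ e2].
move/setP/(_ y1); rewrite !inE eqxx orbT /=.
have /negPf-> : y1 != x by apply: contraTneq e1 => ->; rewrite eirr.
by move/esym/eqP.
Qed.


Lemma Nb_sub S x : Nb S x \subset S :\ x.
Proof.
apply/subsetP => y; rewrite !inE => /andP[yS exy]; rewrite yS andbT.
by apply: contraTneq exy => ->; rewrite eirr.
Qed.

Lemma GP S x p y : y \in S :\ x -> path (restr e S) y p ->
  (x \in p -> exists2 n, n \in Nb S x & connect (restr e (S :\ x)) y n) /\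
  (x \notin p -> connect (restr e (S :\ x)) y (last y p)).
Proof.
elim: p y => [|z p IH] y yS' /=; first by split=> // _; apply: connect0.
case/andP=> /and3P[yS zS eyz] pp.
case: (eqVneq z x) => [zx|zx].
  split; last by rewrite in_cons zx eqxx.
  move=> _; exists y; last exact: connect0.
  by rewrite inE yS -zx e_sym.
have zS' : z \in S :\ x by rewrite in_setD1 zx zS.
have ryz : connect (restr e (S :\ x)) y z by apply: connect1; rewrite /restr yS' zS' eyz.
have [IH1 IH2] := IH z zS' pp.
rewrite in_cons eq_sym (negPf zx) /=; split.
  by move/IH1 => [n nN czn]; exists n => //; apply: connect_trans czn.
by move/IH2; apply: connect_trans.
Qed.

Lemma L_om S x : x \in S -> (ncomp e S + Kc S x = ncomp e (S :\ x) + 1)%N.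
Proof.
move=> xS; rewrite !om_card /Kc.
set rS := restr e S; set r' := restr e (S :\ x).
set A := [set fingraph.root rS y | y in S].
set A' := [set fingraph.root r' y | y in S :\ x].
set B := [set fingraph.root r' y | y in Nb S x].
have BA' : B \subset A' by apply: imsetS; apply: Nb_sub.
have F1 y : y \in S :\ x -> fingraph.root rS (fingraph.root r' y) = fingraph.root rS y.
  move=> yS'; symmetry; apply/(fingraph.rootP (csym S)); apply: (connect_mono (subD1set S x)).
  exact: connect_root.
have F2 y : y \in S :\ x -> fingraph.root r' y \notin B -> ~~ connect rS y x.
  move=> yS' ynB; apply/negP => /connectP[p pp xl].
  have xp : x \in p.
    have := mem_last y p; rewrite -xl in_cons => /orP[/eqP xy|//].
    by move: yS'; rewrite xy in_setD1 eqxx.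
  have [n nN cyn] := (GP yS' pp).1 xp.
  case/negP: ynB; apply/imsetP; exists n => //.
  by apply/(fingraph.rootP (csym _)).
have img : [set fingraph.root rS t | t in A' :\: B] = A :\ fingraph.root rS x.
  apply/setP => s; apply/imsetP/idP.
    case=> t; rewrite in_setD => /andP[tnB /imsetP[y yS' tE]] ->.
    subst t.
    rewrite F1 // in_setD1; apply/andP; split.
      by rewrite (fingraph.root_connect (csym S)); exact: F2 y yS' tnB.
    by apply/imsetP; exists y => //; move: yS'; rewrite in_setD1 => /andP[_ ->].
  rewrite in_setD1 => /andP[snx /imsetP[z zS sz]].
  have zx : z != x by apply: contraNneq snx => zx; rewrite sz zx.
  have zS' : z \in S :\ x by rewrite in_setD1 zx zS.
  exists (fingraph.root r' z); last by rewrite F1.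
  rewrite in_setD; apply/andP; split; last by apply/imsetP; exists z.
  apply/negP => /imsetP[n nN /(fingraph.rootP (csym _)) czn].
  move/eqP: snx; apply; rewrite sz; apply/(fingraph.rootP (csym S)).
  apply: connect_trans (connect_mono (subD1set S x) czn) _; apply: connect1.
  by move: nN; rewrite inE /rS /restr xS e_sym => /andP[-> ->].
have inj : {in A' :\: B &, injective (fingraph.root rS)}.
  move=> t1 t2; rewrite !in_setD => /andP[t1nB /imsetP[y1 y1S t1E]] /andP[t2nB /imsetP[y2 y2S t2E]].
  subst t1 t2.
  rewrite !F1 // => /(fingraph.rootP (csym S)) /connectP[p pp y2l].
  apply/(fingraph.rootP (csym _)).
  case: (boolP (x \in p)) => xp.
    have [n nN cyn] := (GP y1S pp).1 xp.
    by case/negP: t1nB; apply/imsetP; exists n => //; apply/(fingraph.rootP (csym _)).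
  by rewrite y2l; apply: (GP y1S pp).2.
have := cardsID B A'.
rewrite (setIidPr BA') -(card_in_imset inj) img.
have := cardsD1 (fingraph.root rS x) A.
rewrite (_ : fingraph.root rS x \in A) ?(imset_f _ xS) //.
move=> h1 h2; rewrite h1 -h2 /=; lia.
Qed.


Lemma K_le S x : (Kc S x <= Dg S x)%N.
Proof. exact: leq_imset_card. Qed.

Lemma om_pos S x : x \in S -> (0 < ncomp e S)%N.
Proof. by move=> xS; rewrite om_card card_gt0; apply/set0Pn; exists (fingraph.root (restr e S) x); apply: imset_f. Qed.

Lemma CY S : (#|S| <= #|edges_in e S| + ncomp e S)%N.
Proof.
elim: {S}_.+1 {-2}S (ltnSn #|S|) => // n IH S Sn.
have [->|[x xS]] := set_0Vmem S; first by rewrite cards0.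
have h1 := L_E xS; have h2 := L_om xS; have h3 := K_le S x.
have h4 := cardsD1 x S; rewrite xS in h4.
have h5 : (#|S :\ x| < n)%N by move: Sn; rewrite h4 /=; lia.
have := IH _ h5; lia.
Qed.

Lemma cyc_eq S x : x \in S ->
  (cyclomatic e S + Kc S x = cyclomatic e (S :\ x) + Dg S x)%N.
Proof.
move=> xS; rewrite /cyclomatic.
have h1 := L_E xS; have h2 := L_om xS; have h3 := K_le S x.
have h4 := cardsD1 x S; rewrite xS in h4.
have := CY S; have := CY (S :\ x); lia.
Qed.

Lemma cyc0 : cyclomatic e set0 = 0%N.
Proof.
rewrite /cyclomatic cards0 subn0 om_card imset0 cards0 addn0.
apply/eqP; rewrite cards_eq0; apply/eqP/setP => E0; rewrite in_set0.
by apply/negP => /edgesP[a [b []]]; rewrite in_set0.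
Qed.

Lemma img_drop (f : T -> T) (A : {set T}) a b : a \in A :\ b -> f a = f b ->
  f @: A = f @: (A :\ b).
Proof.
move=> aA fab.
  apply/setP => z; apply/imsetP/imsetP => [[y yA ->]|[y yA ->]].
  case: (eqVneq y b) => [->|yb]; first by exists a.
  by exists y => //; rewrite in_setD1 yb.
by exists y => //; move: yA; rewrite in_setD1 => /andP[].
Qed.

Lemma cond_a S x : reflect (exists a b, [/\ a != b, a \in Nb S x, b \in Nb S x &
   connect (restr e (S :\ x)) a b]) (Kc S x < Dg S x)%N.
Proof.
apply: (iffP idP) => [lt|[a [b [ab aN bN cab]]]].
  have : [exists a in Nb S x, exists b in Nb S x, (a != b) && connect (restr e (S :\ x)) a b].
    apply: (contraLR _ lt) => H0; rewrite -leqNgt.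
    suff /eqP-> : Kc S x == Dg S x by [].
    apply/imset_injP => a b aN bN /(fingraph.rootP (csym _)) cab.
    apply/eqP/negPn/negP => nab; case/negP: H0; apply/existsP; exists a; rewrite aN /=.
    by apply/existsP; exists b; rewrite bN nab cab.
  case/existsP => a /andP[aN /existsP[b /and3P[bN ab cab]]]; by exists a, b.
rewrite /Kc (@img_drop _ _ a b); last by apply/(fingraph.rootP (csym _)).
  apply: leq_ltn_trans (leq_imset_card _ _) _.
  by rewrite /Dg (cardsD1 b (Nb S x)) bN.
by rewrite in_setD1 ab aN.
Qed.

Lemma C3 S x a b c d : a \in Nb S x -> b \in Nb S x -> c \in Nb S x -> d \in Nb S x ->
  b != d -> a != b -> a != d -> c != b -> c != d ->
  connect (restr e (S :\ x)) a b -> connect (restr e (S :\ x)) c d ->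
  (Kc S x + 2 <= Dg S x)%N.
Proof.
move=> aN bN cN dN bd ab ad cb cd cab ccd.
rewrite /Kc (@img_drop _ _ a b); last 2 first.
- by rewrite in_setD1 ab aN.
- by apply/(fingraph.rootP (csym _)).
rewrite (@img_drop _ _ c d); last 2 first.
- by rewrite !in_setD1 cd cb cN.
- by apply/(fingraph.rootP (csym _)).
have := leq_imset_card (fingraph.root (restr e (S :\ x))) (Nb S x :\ b :\ d).
rewrite /Dg (cardsD1 b (Nb S x)) bN (cardsD1 d (Nb S x :\ b)) in_setD1 eq_sym bd dN /=.
move=> h; rewrite addnC; exact: h.
Qed.

Lemma Nb_mono S S' y : S \subset S' -> Nb S y \subset Nb S' y.
Proof. by move=> sub; apply/subsetP => z; rewrite !inE => /andP[/(subsetP sub) -> ->]. Qed.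

Lemma claim S : (0 < cyclomatic e S)%N -> exists2 x, x \in S & (Kc S x < Dg S x)%N.
Proof.
elim: {S}_.+1 {-2}S (ltnSn #|S|) => // n IH S Sn cpos.
have [S0|[x xS]] := set_0Vmem S; first by move: cpos; rewrite S0 cyc0.
case: (ltnP (Kc S x) (Dg S x)) => [lt|ge]; first by exists x.
have h := cyc_eq xS; have := K_le S x.
have h4 := cardsD1 x S; rewrite xS in h4.
have h5 : (#|S :\ x| < n)%N by move: Sn; rewrite h4 /=; lia.
move=> h6; have [|y yS lt] := IH _ h5; first lia.
move: yS; rewrite in_setD1 => /andP[yx yS]; exists y => //.
case/cond_a: lt => a [b [ab aN bN cab]]; apply/cond_a; exists a, b; split => //.
- exact: (subsetP (Nb_mono _ (subD1set S x))).
- exact: (subsetP (Nb_mono _ (subD1set S x))).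
apply: connect_mono cab; apply/subsetP => z; rewrite !in_setD1 => /and3P[-> _ ->].
by [].
Qed.

Lemma Dg_del S x y : x \in S -> y \in S :\ x -> Dg S y = (Dg (S :\ x) y + e y x)%N.
Proof.
move=> xS yS'; rewrite /Dg (cardsD1 x (Nb S y)) inE xS /= addnC; congr (_ + _)%N.
apply: eq_card => z; rewrite !inE; by case: (z == x); rewrite ?andbF.
Qed.

Lemma sum_ind S x : x \in S -> (\sum_(y in S :\ x) (e y x : nat))%N = Dg S x.
Proof.
move=> xS; rewrite -big_mkcondr /= sum1_card /Dg; apply: eq_card => z.
rewrite unfold_in /= in_setD1 inE (e_sym z x); case exz: (e x z); rewrite ?andbF ?andbT //.
by have -> : z != x by apply: contraTneq exz => ->; rewrite eirr.
Qed.

Lemma handshake S : (\sum_(y in S) Dg S y)%N = (2 * #|edges_in e S|)%N.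
Proof.
elim: {S}_.+1 {-2}S (ltnSn #|S|) => // n IH S Sn.
have [->|[x xS]] := set_0Vmem S.
  by rewrite big_set0; move: (cyc0); rewrite /cyclomatic om_card imset0 cards0 subn0 addn0 => ->.
have h4 := cardsD1 x S; rewrite xS in h4.
have h5 : (#|S :\ x| < n)%N by move: Sn; rewrite h4 /=; lia.
rewrite (big_setD1 x xS) /=.
rewrite (eq_bigr (fun y => Dg (S :\ x) y + e y x)%N); last by move=> y yS; apply: Dg_del.
rewrite big_split /= IH // sum_ind // (L_E xS); lia.
Qed.

Lemma deg2 S x : x \in S -> (forall y, y \in S -> 2 <= Dg S y)%N -> (0 < cyclomatic e S)%N.
Proof.
move=> xS h.
have : (\sum_(y in S) 2 <= \sum_(y in S) Dg S y)%N by apply: leq_sum.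
rewrite handshake sum_nat_const /cyclomatic.
have := om_pos xS; lia.
Qed.


Lemma indepP (I : {set T}) : reflect (forall a b, a \in I -> b \in I -> ~~ e a b) (independent e I).
Proof.
apply: (iffP forallP) => [h a b aI bI|h a].
  by move: (h a); rewrite aI /= => /forallP /(_ b); rewrite bI.
by apply/implyP => aI; apply/forallP => b; apply/implyP => bI; apply: h.
Qed.

Lemma alpha_mono S S' : S \subset S' -> (indep_num e S <= indep_num e S')%N.
Proof.
move=> sub; apply/bigmax_leqP => I /andP[IS indI]; apply: leq_bigmax_cond.
by rewrite indI (subset_trans IS sub).
Qed.

Lemma alpha_add S S' x : x \in S -> S' \subset S :\ x ->
  (forall y, y \in S' -> ~~ e x y) -> (indep_num e S' + 1 <= indep_num e S)%N.
Proof.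
move=> xS sub nxy.
have P0 : (set0 \subset S') && independent e set0.
  by rewrite sub0set; apply/indepP => a b; rewrite in_set0.
rewrite /indep_num (bigop.bigmax_eq_arg set0 P0).
case: arg_maxnP => // I /andP[IS' /indepP indI] _.
have IS : I \subset S :\ x := subset_trans IS' sub.
have xI : x \notin I by apply/negP => /(subsetP IS); rewrite in_setD1 eqxx.
have cU : #|x |: I| = (#|I| + 1)%N by rewrite cardsU1 xI addnC.
rewrite -cU.
apply: leq_bigmax_cond; apply/andP; split.
  apply/subsetP => z; rewrite in_setU1 => /orP[/eqP->//|/(subsetP IS)].
  by rewrite in_setD1 => /andP[].
apply/indepP => a b; rewrite !in_setU1 => /orP[/eqP->|aI] /orP[/eqP->|bI].
- by rewrite eirr.
- by apply: nxy; apply: (subsetP IS').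
- by rewrite e_sym; apply: nxy; apply: (subsetP IS').
- exact: indI.
Qed.

Lemma next_neq p x : cycle e p -> x \in p -> next p x != x.
Proof. by move=> cp xp; apply: contraTneq (next_cycle cp xp) => ->; rewrite eirr. Qed.

Lemma prev_neq p x : cycle e p -> x \in p -> prev p x != x.
Proof. by move=> cp xp; apply: contraTneq (prev_cycle cp xp) => ->; rewrite eirr. Qed.

Lemma cyc_conn p x v : cycle e p -> uniq p -> x \in p -> v \in p -> v != x ->
  connect (restr e (setT :\ x)) (next p x) v.
Proof.
move=> cp up xp vp vx.
case: (rot_to xp) => i s rE.
rewrite -(next_rot i up) rE.
have cp' : cycle e (x :: s) by rewrite -rE rot_cycle.
have up' : uniq (x :: s) by rewrite -rE rot_uniq.
have vp' : v \in x :: s by rewrite -rE mem_rot.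
case: s {rE} cp' up' vp' => [|y q] cp' up' vp'.
  by move: vp'; rewrite inE (negPf vx).
rewrite next_nth mem_head /= eqxx /=.
move: cp'; rewrite /= rcons_path => /and3P[_ pq _].
have vq : v \in y :: q by move: vp'; rewrite in_cons => /orP[/eqP vx'|//]; rewrite vx' eqxx in vx.
apply: (path_connect _ vq).
apply: (@sub_in_path _ (mem (setT :\ x)) e) pq.
  by move=> a b aS bS eab; rewrite /restr aS bS eab.
move: up' => /andP[xnq _]; apply/allP => z zq. change (z \in [set: T] :\ x); rewrite in_setD1 in_setT andbT.
by apply: contraNneq xnq => <-.
Qed.

Lemma prev_next_neq p x : (2 < size p)%N -> uniq p -> x \in p -> prev p x != next p x.
Proof.
move=> sp up xp; apply/negP => /eqP pn.
have nn : next p (next p x) = x by rewrite -pn next_prev.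
case: (rot_to xp) => i s rE.
have up' : uniq (x :: s) by rewrite -rE rot_uniq.
have sz : size (x :: s) = size p by rewrite -rE size_rot.
move: nn; rewrite -!(next_rot i up) rE.
case: s {rE} up' sz => [|y [|z q]] up' sz //=; try by move: sp; rewrite -sz.
have yx : y != x by apply: contraTneq up' => ->; rewrite /= in_cons eqxx.
have zx : z != x by apply: contraTneq up' => ->; rewrite /= !in_cons eqxx orbT.
by rewrite eqxx (negPf yx) eqxx => /eqP; rewrite (negPf zx).
Qed.

Lemma cycle_cond p u : is_cycle e p -> u \in p -> (Kc setT u < Dg setT u)%N.
Proof.
case/andP => sp /andP[cp up] up'.
apply/cond_a; exists (prev p u), (next p u); split.
- exact: prev_next_neq.
- by rewrite inE in_setT e_sym (prev_cycle cp up').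
- by rewrite inE in_setT (next_cycle cp up').
rewrite csym; apply: cyc_conn => //; first by rewrite mem_prev.
exact: prev_neq.
Qed.


Lemma next_nth_uniq (u : T) (s : seq T) k : uniq (u :: s) -> (k < size (u :: s))%N ->
  next (u :: s) (nth u (u :: s) k) = nth u (u :: s) k.+1.
Proof. by move=> uq kl; rewrite next_nth mem_nth // index_uniq. Qed.

Lemma edge_mem p a b : [set a; b] \in cycle_edges p -> a \in p.
Proof.
case/imsetP => y yp /setP /(_ a); rewrite !inE eqxx /= => /esym /orP[/eqP->|/eqP->] //.
by rewrite mem_next.
Qed.

Lemma depart p q u z : is_cycle e p -> is_cycle e q -> u \in p -> u \in q -> z \in q ->
  [set z; next q z] \notin cycle_edges p -> exists x, (Kc setT x + 2 <= Dg setT x)%N.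
Proof.
move=> cpa cqa up uq zq zE.
case/andP: cpa => sp /andP[cp upp]; case/andP: cqa => sq /andP[cq uqq].
case: (rot_to uq) => i s rE.
have nq : next q =1 next (u :: s) by move=> w; rewrite -(next_rot i uqq) rE.
have mq w : (w \in q) = (w \in u :: s) by rewrite -(mem_rot i) rE.
have cq' : cycle e (u :: s) by rewrite -rE rot_cycle.
have uq' : uniq (u :: s) by rewrite -rE rot_uniq.
have sq' : (2 < size (u :: s))%N by rewrite -rE size_rot.
have exk : exists k, (k < size (u :: s))%N && ([set nth u (u :: s) k; nth u (u :: s) k.+1] \notin cycle_edges p).
  exists (index z (u :: s)); rewrite index_mem -mq zq andTb.
  rewrite -next_nth_uniq ?index_mem -?mq // nth_index -?mq // -nq; exact: zE.
case: (ex_minnP exk) => k /andP[kl kE] kmin.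
set x := nth u (u :: s) k; set y := nth u (u :: s) k.+1.
have xq' : x \in (u :: s) by apply: mem_nth.
have yE : y = next (u :: s) x by rewrite next_nth_uniq.
have xp : x \in p.
  suff: forall j, (j <= k)%N -> nth u (u :: s) j \in p by apply.
  elim=> [|j IH] jk; first by [].
  have : [set nth u (u :: s) j; nth u (u :: s) j.+1] \in cycle_edges p.
    apply/negPn/negP => h; have := kmin j.
    by rewrite (ltn_trans jk kl) h => /(_ isT); rewrite leqNgt jk.
  by rewrite setUC; apply: edge_mem.
set a := prev p x; set b := next p x.
have exy : e x y by rewrite yE; apply: next_cycle.
have exa : e x a by rewrite e_sym; apply: prev_cycle.
have exb : e x b by apply: next_cycle.
have ab : a != b by apply: prev_next_neq.
have Eb : [set x; b] \in cycle_edges p by apply: imset_f.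
have Ea : [set x; a] \in cycle_edges p.
  by rewrite setUC -{1}(next_prev upp x); apply: imset_f; rewrite mem_prev.
have yb : y != b by apply: contraNneq kE => h; rewrite -/x -/y h.
have ya : y != a by apply: contraNneq kE => h; rewrite -/x -/y h.
have cpx w : w \in p -> w != x -> connect (restr e (setT :\ x)) b w.
  by move=> wp wx; apply: cyc_conn.
have cba : connect (restr e (setT :\ x)) b a.
  by apply: cpx; [rewrite mem_prev | apply: prev_neq].
set t := if k == 0%N then prev (u :: s) u else u.
have tq : t \in (u :: s) by rewrite /t; case: ifP; rewrite ?mem_prev mem_head.
have tx : t != x.
  rewrite /t /x; case: ifP => [/eqP k0|kn0]; first by rewrite k0; exact: (prev_neq cq' (mem_head _ _)).
  have := nth_uniq u (ltn0Sn _ : (0 < size (u :: s))%N) kl uq'.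
  by rewrite /= => ->; rewrite eq_sym kn0.
have cyt : connect (restr e (setT :\ x)) y t by rewrite yE; apply: cyc_conn.
have NB w : e x w -> w \in Nb setT x by move=> h; rewrite inE in_setT h.
exists x.
case: (boolP (t \in p)) => tp.
  apply: (@C3 _ x b y b a) => //; try by apply: NB.
  all: try by rewrite eq_sym.
  by rewrite (connect_trans (cpx t tp tx)) // csym.
have k0 : k = 0%N by move: tp; rewrite /t; case: eqP => // _; rewrite up.
have xu : x = u by rewrite /x k0.
have tE : t = prev (u :: s) x by rewrite /t k0 xu.
have ext : e x t by rewrite tE e_sym; apply: prev_cycle.
have ty : t != y by rewrite tE yE; apply: prev_next_neq.
have ta : t != a by apply: contraNneq tp => ->; rewrite mem_prev.
have tb : t != b by apply: contraNneq tp => ->; rewrite mem_next.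
apply: (@C3 _ x t y a b) => //; try by apply: NB.
all: try by rewrite eq_sym.
all: by rewrite csym.
Qed.

End Comb.

Local Open Scope ring_scope.

Section MatGen.
Variable F : fieldType.

Lemma rank_mxsub m n m' n' (f : 'I_m' -> 'I_m) (g : 'I_n' -> 'I_n) (M : 'M[F]_(m, n)) :
  (\rank (mxsub f g M) <= \rank M)%N.
Proof.
have -> : mxsub f g M = (rowsub g (rowsub f M)^T)^T by apply/matrixP => i j; rewrite !mxE.
rewrite mxrank_tr; apply: leq_trans (mxrankS (rowsub_sub _ _)) _.
by rewrite mxrank_tr; apply: mxrankS; apply: rowsub_sub.
Qed.

Lemma zero_col m n (M : 'M[F]_(m, n)) (v : 'rV[F]_n) j :
  (v <= M)%MS -> (forall i, M i j = 0) -> v 0 j = 0.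
Proof. by case/submxP => D -> H; rewrite mxE big1 // => i _; rewrite H mulr0. Qed.

Lemma col_mx_lt m n (M : 'M[F]_(m, n)) (v : 'rV[F]_n) :
  ~~ (v <= M)%MS -> (\rank M < \rank (col_mx M v))%N.
Proof.
move=> nvM; apply: rank_ltmx; rewrite ltmxE; apply/andP; split.
  by have := submx_refl (col_mx M v); rewrite col_mx_sub => /andP[].
by rewrite col_mx_sub submx_refl.
Qed.

End MatGen.

Section Mat.
Variable R : realType.
Variable T : finType.
Variable e : rel T.
Variable phi : T -> T -> R[i].
Hypothesis e_sym : symmetric e.
Hypothesis eirr : irreflexive e.
Hypothesis ug : unit_gain e phi.
Implicit Types (S : {set T}).

Lemma phi_neq0 x y : e x y -> phi x y != 0.
Proof.
move=> exy; have [n1 _] := ug exy; apply/eqP => p0; move: n1; rewrite p0 normr0.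
by move/eqP; rewrite eq_sym oner_eq0.
Qed.

Definition emb (S S' : {set T}) (sub : S \subset S') (i : 'I_#|S|) : 'I_#|S'| :=
  enum_rank_in (subsetP sub _ (enum_valP i)) (enum_val i).

Lemma embE (S S' : {set T}) (sub : S \subset S') i : enum_val (emb sub i) = enum_val i.
Proof. by rewrite /emb enum_rankK_in // (subsetP sub _ (enum_valP i)). Qed.

Lemma rank_mono (S S' : {set T}) : S \subset S' -> (gain_rank e phi S <= gain_rank e phi S')%N.
Proof.
move=> sub; rewrite /gain_rank.
have -> : gain_adj e phi S = mxsub (emb sub) (emb sub) (gain_adj e phi S').
  by apply/matrixP => i j; rewrite !mxE !embE.
exact: rank_mxsub.
Qed.


Lemma rank_pendant (S : {set T}) w u : w \in S -> u \in S -> e w u ->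
  (forall y, y \in S -> e w y -> y = u) ->
  (gain_rank e phi (S :\ w :\ u) + 2 <= gain_rank e phi S)%N.
Proof.
move=> wS uS ewu wonly.
have sub : S :\ w :\ u \subset S by apply: subset_trans (subD1set _ _) (subD1set _ _).
set A := gain_adj e phi S.
set ub := enum_rank_in uS u; set wb := enum_rank_in wS w.
have ubE : enum_val ub = u by rewrite /ub enum_rankK_in.
have wbE : enum_val wb = w by rewrite /wb enum_rankK_in.
have Aij i j : A i j = if e (enum_val i) (enum_val j) then phi (enum_val i) (enum_val j) else 0.
  by rewrite /A mxE.
set a := A wb ub.
have aE : a = phi w u by rewrite /a Aij ubE wbE ewu.
have a0 : a != 0 by rewrite aE phi_neq0.
set f := emb sub.
have fS i : enum_val (f i) \in S :\ w :\ u by rewrite embE; exact: enum_valP.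
have fu i : enum_val (f i) != u by have := fS i; rewrite in_setD1 => /andP[].
have fw i : enum_val (f i) != w by have := fS i; rewrite !in_setD1 => /and3P[].
have fSS i : enum_val (f i) \in S by apply: (subsetP sub); apply: fS.
have Awf j : A wb (f j) = 0.
  rewrite Aij wbE; case: ifP => // ewf.
  by have := wonly _ (fSS j) ewf; move/eqP; rewrite (negPf (fu j)).
have Afw i : A (f i) wb = 0.
  rewrite Aij wbE; case: ifP => // efw; rewrite e_sym in efw.
  by have := wonly _ (fSS i) efw; move/eqP; rewrite (negPf (fu i)).
have Aww : A wb wb = 0 by rewrite Aij wbE eirr.
pose C := \matrix_(i < #|S :\ w :\ u|, j < #|S|) (A (f i) j - A (f i) ub / a * A wb j).
have h1 : (gain_rank e phi (S :\ w :\ u) <= \rank C)%N.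
  rewrite /gain_rank.
  have -> : gain_adj e phi (S :\ w :\ u) = mxsub id f C.
    apply/matrixP => i j; rewrite !mxE wbE.
    have -> : e w (enum_val (f j)) = false.
      by apply/negP => ewf; have := wonly _ (fSS j) ewf; move/eqP; rewrite (negPf (fu j)).
    by rewrite mulr0 subr0 !embE.
  exact: rank_mxsub.
have h2 : (C <= A)%MS.
  apply/row_subP => i.
  have -> : row i C = row (f i) A + (- (A (f i) ub / a)) *: row wb A.
    by apply/matrixP => k j; rewrite !mxE mulNr.
  by rewrite addmx_sub ?scalemx_sub ?row_sub.
have Cu i : C i ub = 0 by rewrite mxE -/a divfK ?subrr.
have Cw i : C i wb = 0 by rewrite mxE Afw Aww mulr0 subr0.
pose v1 := row wb A.
have v1u : v1 0 ub = a by rewrite mxE.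
have nv1 : ~~ (v1 <= C)%MS.
  by apply/negP => H; have := zero_col H Cu; rewrite v1u; apply/eqP.
pose M1 := col_mx C v1.
have M1w i : M1 i wb = 0.
  by rewrite mxE; case: (split i) => k /=; [exact: Cw | rewrite mxE Aww].
pose v2 := row ub A.
have v2w : v2 0 wb = phi u w by rewrite mxE Aij ubE wbE e_sym ewu.
have nv2 : ~~ (v2 <= M1)%MS.
  by apply/negP => H; have := zero_col H M1w; rewrite v2w; apply/eqP; apply: phi_neq0; rewrite e_sym.
have h3 : (col_mx M1 v2 <= A)%MS by rewrite !col_mx_sub h2 !row_sub.
have := mxrankS h3; have := col_mx_lt nv2; have := col_mx_lt nv1.
move: h1; rewrite /gain_rank -/A /M1 addn2 => k1 k2 k3 k4.
apply: (leq_trans _ k4); apply: (leq_trans _ k3); rewrite ltnS.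
by apply: (leq_trans _ k2); rewrite ltnS.
Qed.


Lemma cyc_del S x : x \in S -> (cyclomatic e (S :\ x) <= cyclomatic e S)%N.
Proof. move=> xS; have := cyc_eq e_sym eirr xS; have := K_le e S x; lia. Qed.

Lemma LB (S : {set T}) :
  (2 * #|S| <= gain_rank e phi S + 2 * cyclomatic e S + 2 * indep_num e S)%N.
Proof.
elim: {S}_.+1 {-2}S (ltnSn #|S|) => // n IH S Sn.
have [->|[x0 x0S]] := set_0Vmem S; first by rewrite cards0.
have cD x : x \in S -> #|S| = #|S :\ x|.+1 by move=> xS; rewrite (cardsD1 x S) xS.
case: (boolP [exists x in S, (Kc e S x < Dg e S x)%N]) => [/exists_inP[x xS lt]|nA].
  have h1 := cyc_eq e_sym eirr xS.
  have h2 := rank_mono (subD1set S x).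
  have h3 := alpha_mono e (subD1set S x).
  have h4 := cD x xS.
  have lt' : (#|S :\ x| < n)%N by rewrite -ltnS -h4.
  have := IH _ lt'.
  lia.
case: (boolP [exists x in S, Dg e S x == 0%N]) => [/exists_inP[x xS /eqP d0]|nB].
  have h1 := cyc_del xS.
  have h2 := rank_mono (subD1set S x).
  have h3 : (indep_num e (S :\ x) + 1 <= indep_num e S)%N.
    apply: (alpha_add e_sym eirr xS (subxx _)) => y yS; apply/negP => exy.
    have yN : y \in Nb e S x by rewrite inE exy; move: yS; rewrite in_setD1 => /andP[_ ->].
    by move: d0; rewrite /Dg (cardsD1 y) yN.
  have h4 := cD x xS.
  have lt' : (#|S :\ x| < n)%N by rewrite -ltnS -h4.
  have := IH _ lt'.
  lia.
case: (boolP [exists x in S, Dg e S x == 1%N]) => [/exists_inP[w wS /eqP d1]|nC].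
  have [u Nu] : exists u, Nb e S w = [set u] by apply/cards1P; move: d1; rewrite /Dg => ->.
  have uN : u \in Nb e S w by rewrite Nu set11.
  move: (uN); rewrite inE => /andP[uS ewu].
  have wonly y : y \in S -> e w y -> y = u.
    by move=> yS ewy; apply/set1P; rewrite -Nu inE yS ewy.
  have uw : u != w by apply: contraTneq ewu => ->; rewrite eirr.
  have uS' : u \in S :\ w by rewrite in_setD1 uw uS.
  have h1 := cyc_del wS; have h1' := cyc_del uS'.
  have h2 := rank_pendant wS uS ewu wonly.
  have h3 : (indep_num e (S :\ w :\ u) + 1 <= indep_num e S)%N.
    apply: (alpha_add e_sym eirr wS (subD1set _ _)) => y yS; apply/negP => ewy.
    move: yS; rewrite !in_setD1 => /and3P[yu _ yS].
    by move: yu; rewrite (wonly y yS ewy) eqxx.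
  have h4 := cD w wS; have h4' : #|S :\ w| = #|S :\ w :\ u|.+1 by rewrite (cardsD1 u (S :\ w)) uS'.
  have lt' : (#|S :\ w :\ u| < n)%N by rewrite -ltnS; apply: ltnW; rewrite -h4' -h4.
  have := IH _ lt'.
  lia.
exfalso.
have deg y : y \in S -> (2 <= Dg e S y)%N.
  move=> yS; rewrite leqNgt; apply/negP => lt.
  have : (Dg e S y == 0%N) || (Dg e S y == 1%N) by move: lt; case: (Dg e S y) => [|[|]].
  by case/orP => h; [case/exists_inP: nB | case/exists_inP: nC]; exists y.
have [x xS lt] := claim e_sym eirr (deg2 e_sym eirr x0S deg).
by case/exists_inP: nA; exists x.
Qed.


Lemma chain x :
  (gain_rank e phi setT + 2 * cyclomatic e setT + 2 * indep_num e setT = 2 * #|[set: T]|)%N ->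
  (Kc e setT x < Dg e setT x)%N ->
  [/\ gain_rank e phi setT = gain_rank e phi (setT :\ x),
      cyclomatic e setT = (cyclomatic e (setT :\ x)).+1,
      indep_num e setT = indep_num e (setT :\ x) &
      (gain_rank e phi (setT :\ x) + 2 * cyclomatic e (setT :\ x)
        + 2 * indep_num e (setT :\ x) = 2 * #|[set: T] :\ x|)%N].
Proof.
move=> H lt.
have xS : x \in [set: T] by rewrite in_setT.
have h1 := cyc_eq e_sym eirr xS.
have h2 := rank_mono (subD1set [set: T] x).
have h3 := alpha_mono e (subD1set [set: T] x).
have h4 : #|[set: T]| = #|[set: T] :\ x|.+1 by rewrite (cardsD1 x [set: T]) xS.
have h5 := LB ([set: T] :\ x).
split; lia.
Qed.

End Mat.

Unset Implicit Arguments.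

Theorem lemma4p4 (R : realType) (T : finType) (e : rel T)
  (phi : T -> T -> R[i]) (u : T) :
  simple_graph e -> unit_gain e phi ->
  (gain_rank e phi setT)%:Z
    = 2 * (#|T|)%:Z - 2 * (cyclomatic e setT)%:Z - 2 * (indep_num e setT)%:Z ->
  (exists p, is_cycle e p && (u \in p)) ->
  [/\ gain_rank e phi setT = gain_rank e phi (setT :\ u),
      (gain_rank e phi (setT :\ u))%:Z
        = 2 * ((#|T|)%:Z - 1) - 2 * (cyclomatic e (setT :\ u))%:Z
          - 2 * (indep_num e (setT :\ u))%:Z,
      cyclomatic e setT = (cyclomatic e (setT :\ u)).+1,
      indep_num e setT = indep_num e (setT :\ u) &
      on_unique_cycle e u /\ ~~ quasi_pendant e u].
Proof.
move=> [eirr e_sym] ug H [p /andP[cp up]].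
have Hn : (gain_rank e phi setT + 2 * cyclomatic e setT + 2 * indep_num e setT
   = 2 * #|[set: T]|)%N.
  rewrite cardsT; lia.
have condu := cycle_cond e_sym eirr cp up.
have [r1 c1 a1 ext] := chain e_sym eirr ug Hn condu.
have uS : u \in [set: T] by rewrite in_setT.
have cT : #|[set: T]| = #|[set: T] :\ u|.+1 by rewrite (cardsD1 u [set: T]) uS.
have noC3 x : (Kc e setT x + 2 <= Dg e setT x)%N -> False.
  move=> h; have lt : (Kc e setT x < Dg e setT x)%N by lia.
  have [_ c2 _ _] := chain e_sym eirr ug Hn lt.
  have := cyc_eq e_sym eirr (in_setT x); lia.
split => //.
- have cT' : #|T| = #|[set: T] :\ u|.+1 by rewrite -cardsT.
  move: ext; rewrite cT'; lia.
split.
  exists p; split => // q cq uq; apply/eqP/negPn/negP => neq.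
  move: neq; rewrite eqEsubset negb_and => /orP[] /subsetPn[E0 E0in E0nin].
    case/imsetP: E0in => z zq E0E; rewrite E0E in E0nin.
    by have [x /noC3] := depart e_sym eirr cp cq up uq zq E0nin.
  case/imsetP: E0in => z zp E0E; rewrite E0E in E0nin.
  by have [x /noC3] := depart e_sym eirr cq cp uq up zp E0nin.
rewrite /quasi_pendant negb_and; apply/orP; right; apply/negP => /existsP[w /andP[euw pw]].
have [v Nv] : exists v, [set y | e w y] = [set v] by apply/cards1P.
have wonly y : y \in [set: T] -> e w y -> y = u.
  move=> _ ewy; have : u \in [set y | e w y] by rewrite inE e_sym.
  have : y \in [set y | e w y] by rewrite inE.
  by rewrite Nv !inE => /eqP -> /eqP ->.
have ewu : e w u by rewrite e_sym.
have wS : w \in [set: T] by rewrite in_setT.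
have uw : u != w by apply: contraTneq euw => ->; rewrite eirr.
have h2 := rank_pendant e_sym eirr ug wS uS ewu wonly.
have Seq : [set: T] :\ w :\ u = [set: T] :\ u :\ w.
  by apply/setP => z; rewrite !in_setD1 andbCA.
have wS' : w \in [set: T] :\ u by rewrite in_setD1 eq_sym uw.
have h1 := cyc_del e_sym eirr wS'.
have h3 : (indep_num e ([set: T] :\ w :\ u) + 1 <= indep_num e [set: T])%N.
  apply: (alpha_add e_sym eirr wS (subD1set _ _)) => y yS; apply/negP => ewy.
  move: yS; rewrite !in_setD1 => /and3P[yu _ _].
  by move: yu; rewrite (wonly y (in_setT y) ewy) eqxx.
have h4 : #|[set: T] :\ u| = #|[set: T] :\ u :\ w|.+1 by rewrite (cardsD1 w ([set: T] :\ u)) wS'.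
have h5 := LB e_sym eirr ug ([set: T] :\ w :\ u).
rewrite Seq in h2 h3 h5.
lia.
Qed.
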